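(* Consider the Maxwell--Bloch system \[ \dot A=B,\quad \dot B=-\Omega^2A-\sigma B+cj(t),\quad i\hbar\dot C_1=\hbar\omega_1C_1+ia(t)C_2,\quad i\hbar\dot C_2=\hbar\omega_2C_2-ia(t)C_1,\qquad t>0, \] with $j(t)=2q\,\mathrm{Im}[\overline{C_1(t)}C_2(t)]$, $a(t)=\frac qc[A(t)+A_p(t)]$, where $A_p\in C[0,\infty)$ is real-valued. Then there exist a quadratic function $V(A,B)$ on $\mathbb R^2$ and constants $a_1,a_2>0$ such that \[ a_1[A^2+B^2]\le V(A,B)\le a_2[A^2+B^2]\quad\text{for all }(A,B)\in\mathbb R^2, \] and constants $\gamma,D>0$ such that for every solution $(A(t),B(t),C_1(t),C_2(t))$ of the system with $|C_1(t)|^2+|C_2(t)|^2=1$, \[ \frac{d}{dt}V(A(t),B(t))\le-\gamma V(A(t),B(t))+D,\qquad t>0. \]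
   Context: Parameters: $\Omega>0$ (resonance frequency), $\sigma>0$ (dissipation), $c>0$, $\hbar>0$, real $\omega_2>\omega_1$, $p>0$, $\omega=\omega_2-\omega_1$, $q=\omega p$. Unknowns: $A(t),B(t)\in\mathbb R$, $C_1(t),C_2(t)\in\mathbb C$. The function $A_p$ (the pumping) is given. *)

(* Defs.v *)
From Stdlib Require Import Reals.
From Coquelicot Require Import Coquelicot.
Open Scope R_scope.

Definition cont_on_nonneg (f : R -> R) : Prop :=
  forall t, 0 <= t ->
    filterlim f (within (fun s => 0 <= s) (locally t)) (locally (f t)).

Definition qconst (w1 w2 p : R) : R := (w2 - w1) * p.

Definition jcur (q : R) (z1 z2 : C) : R := 2 * q * Im (Cconj z1 * z2).

Definition MB_solution (Omega sigma c hbar w1 w2 p : R) (Ap : R -> R)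
    (A B : R -> R) (C1 C2 : R -> C) : Prop :=
  let q := qconst w1 w2 p in
  forall t, 0 < t ->
    let a := q / c * (A t + Ap t) in
    is_derive A t (B t) /\
    is_derive B t (- Omega ^ 2 * A t - sigma * B t + c * jcur q (C1 t) (C2 t)) /\
    exists dC1 dC2 : C,
      is_derive C1 t dC1 /\ is_derive C2 t dC2 /\
      (Ci * hbar * dC1 = hbar * w1 * C1 t + Ci * a * C2 t)%C /\
      (Ci * hbar * dC2 = hbar * w2 * C2 t - Ci * a * C1 t)%C.

Definition quadV (k1 k2 k3 : R) (x y : R) : R := k1 * x ^ 2 + k2 * x * y + k3 * y ^ 2.

(* Main.v *)
Require Import Defs.
From Stdlib Require Import Reals Lra Psatz.
From Coquelicot Require Import Coquelicot.
Open Scope R_scope.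
Lemma der (k1 k2 k3 : R) (A B : R -> R) t da db :
  is_derive A t da -> is_derive B t db ->
  is_derive (fun s => quadV k1 k2 k3 (A s) (B s)) t
   (2*k1*A t*da + k2*(da*B t + A t*db) + 2*k3*B t*db).
Proof.
  intros HA HB. unfold quadV.
  assert (EA : ex_derive A t) by (exists da; exact HA).
  assert (EB : ex_derive B t) by (exists db; exact HB).
  rewrite <- (is_derive_unique _ _ _ HA), <- (is_derive_unique _ _ _ HB).
  auto_derive; auto. change (Derive (fun x => A x) t) with (Derive A t). change (Derive (fun x => B x) t) with (Derive B t). ring.
Qed.
Lemma jbound (q : R) (z1 z2 : C) :
  Cmod z1 ^ 2 + Cmod z2 ^ 2 = 1 -> (jcur q z1 z2) ^ 2 <= q ^ 2.
Proof.
  intros H. destruct z1 as [x1 y1], z2 as [x2 y2].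
  unfold Cmod in H.
  rewrite !pow2_sqrt in H by (apply Rplus_le_le_0_compat; apply pow2_ge_0).
  simpl in H.
  unfold jcur, Cconj, Im; simpl.
  assert (HI : (x1 * y2 + - y1 * x2) * (x1 * y2 + - y1 * x2) <= 1/4).
  { set (a := x1*x1+y1*y1). set (b := x2*x2+y2*y2).
    assert (Hab : a + b = 1) by (unfold a, b; lra).
    assert (Hid : (x1 * y2 + - y1 * x2) * (x1 * y2 + - y1 * x2) + (x1*x2 + y1*y2)*(x1*x2 + y1*y2) = a*b)
      by (unfold a, b; ring).
    pose proof (Rle_0_sqr (x1*x2 + y1*y2)) as Hs; unfold Rsqr in Hs.
    pose proof (Rle_0_sqr (a-b)) as Hs2; unfold Rsqr in Hs2.
    assert (a*b <= 1/4) by nra. lra. }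
  assert (0 <= q*q) by nra.
  replace (2 * q * (x1 * y2 + - y1 * x2) * (2 * q * (x1 * y2 + - y1 * x2) * 1))
    with (4 * (q*q) * ((x1 * y2 + - y1 * x2) * (x1 * y2 + - y1 * x2))) by ring.
  nra.
Qed.

Theorem lemma2p1 (Omega sigma c hbar w1 w2 p : R) (Ap : R -> R) :
  0 < Omega -> 0 < sigma -> 0 < c -> 0 < hbar -> w1 < w2 -> 0 < p ->
  cont_on_nonneg Ap ->
  exists (k1 k2 k3 a1 a2 : R),
    0 < a1 /\ 0 < a2 /\
    (forall x y : R,
        a1 * (x ^ 2 + y ^ 2) <= quadV k1 k2 k3 x y /\
        quadV k1 k2 k3 x y <= a2 * (x ^ 2 + y ^ 2)) /\
    exists (gamma D : R), 0 < gamma /\ 0 < D /\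
      forall (A B : R -> R) (C1 C2 : R -> C),
        MB_solution Omega sigma c hbar w1 w2 p Ap A B C1 C2 ->
        (forall t, 0 < t -> Cmod (C1 t) ^ 2 + Cmod (C2 t) ^ 2 = 1) ->
        forall t, 0 < t ->
          Derive (fun s => quadV k1 k2 k3 (A s) (B s)) t
            <= - gamma * quadV k1 k2 k3 (A t) (B t) + D.
Proof.
  intros HO Hs Hc Hh Hw Hp _.
  set (O2 := Omega ^ 2).
  assert (HO2 : 0 < O2) by (unfold O2; nra).
  set (e := Rmin sigma (Rmin O2 1)).
  assert (He0 : 0 < e) by (apply Rmin_glb_lt; [lra| apply Rmin_glb_lt; lra]).
  assert (Hes : e <= sigma) by apply Rmin_l.
  assert (HeO : e <= O2) by (eapply Rle_trans; [apply Rmin_r| apply Rmin_l]).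
  assert (He1 : e <= 1) by (eapply Rle_trans; [apply Rmin_r| apply Rmin_r]).
  set (k1 := O2 + e * sigma / 2).
  set (a1 := Rmin O2 1 / 2).
  set (a2 := k1 + 2).
  assert (Ha1 : 0 < a1) by (unfold a1;
     assert (0 < Rmin O2 1) by (apply Rmin_glb_lt; lra); lra).
  assert (Hk1 : 0 < k1) by (unfold k1; assert (0 < e*sigma) by nra; lra).
  assert (Ha2 : 0 < a2) by (unfold a2; lra).
  assert (Hm1 : a1 <= O2 / 2) by (unfold a1; pose proof (Rmin_l O2 1); lra).
  assert (Hm2 : a1 <= 1 / 2) by (unfold a1; pose proof (Rmin_r O2 1); lra).
  assert (Hk1b : O2 <= k1) by (unfold k1; assert (0 < e*sigma) by nra; lra).
  assert (Hbnd : forall x y, a1 * (x ^ 2 + y ^ 2) <= quadV k1 e 1 x y /\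
        quadV k1 e 1 x y <= a2 * (x ^ 2 + y ^ 2)).
  { intros x y. unfold quadV, a2.
    assert (Hxy : 2 * Rabs (x*y) <= x^2 + y^2).
    { pose proof (Rle_0_sqr (x-y)). pose proof (Rle_0_sqr (x+y)). unfold Rsqr in *.
      destruct (Rle_dec 0 (x*y)); [rewrite Rabs_right by lra|rewrite Rabs_left by lra];
      lra. }
    assert (Hexy : Rabs (e*x*y) <= e/2*(x^2+y^2)).
    { rewrite Rmult_assoc, Rabs_mult, (Rabs_right e) by lra.
      pose proof (Rmult_le_compat_l e _ _ (Rlt_le _ _ He0) Hxy). lra. }
    pose proof (Rle_abs (e*x*y)). pose proof (Rle_abs (- (e*x*y))).
    rewrite Rabs_Ropp in H0.
    assert (0 <= x^2) by apply pow2_ge_0. assert (0 <= y^2) by apply pow2_ge_0.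
    assert (a1 * x^2 <= O2/2 * x^2) by (apply Rmult_le_compat_r; lra).
    assert (a1 * y^2 <= 1/2 * y^2) by (apply Rmult_le_compat_r; lra).
    assert (O2 * x^2 <= k1 * x^2) by (apply Rmult_le_compat_r; lra).
    assert (e/2*(x^2+y^2) <= 1/2*(x^2+y^2)) by (apply Rmult_le_compat_r; lra).
    assert (e/2*x^2 <= O2/2*x^2) by (apply Rmult_le_compat_r; lra).
    assert (e/2*(x^2+y^2) = e/2*x^2 + e/2*y^2) by ring.
    assert (e/2*y^2 <= 1/2*y^2) by (apply Rmult_le_compat_r; lra).
    split; nra. }
  set (M2 := (c * qconst w1 w2 p) ^ 2).
  assert (HM2 : 0 <= M2) by (unfold M2; nra).
  set (m := Rmin (e * O2 / 2) (sigma / 2)).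
  assert (Hm0 : 0 < m) by (apply Rmin_glb_lt; nra).
  assert (Hma : m <= e * O2 / 2) by apply Rmin_l.
  assert (Hmb : m <= sigma / 2) by apply Rmin_r.
  exists k1, e, 1, a1, a2. split; [exact Ha1|]. split; [exact Ha2|].
  split; [exact Hbnd|].
  exists (m / a2), (M2 * (e / (2 * O2) + 2 / sigma) + 1).
  split; [apply Rdiv_lt_0_compat; lra|].
  split. { assert (0 <= M2 * (e / (2 * O2) + 2 / sigma)).
    { apply Rmult_le_pos; [lra|]. assert (0 < e/(2*O2)) by (apply Rdiv_lt_0_compat; lra).
      assert (0 < 2/sigma) by (apply Rdiv_lt_0_compat; lra). lra. } lra. }
  intros A B C1 C2 Hsol Hnorm t Ht.
  destruct (Hsol t Ht) as [HA [HB _]].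
  rewrite (is_derive_unique (fun s : R => quadV k1 e 1 (A s) (B s)) t _ (der k1 e 1 A B t _ _ HA HB)).
  set (F := c * jcur (qconst w1 w2 p) (C1 t) (C2 t)).
  fold F.
  assert (HF : F ^ 2 <= M2).
  { unfold F, M2. rewrite !Rpow_mult_distr. apply Rmult_le_compat_l; [nra|].
    apply jbound, Hnorm, Ht. }
  set (x := A t). set (y := B t).
  assert (Hd : 2 * k1 * x * y + e * (y * y + x * (- Omega ^ 2 * x - sigma * y + F)) +
     2 * 1 * y * (- Omega ^ 2 * x - sigma * y + F)
     = - e * O2 * x^2 - (2*sigma - e) * y^2 + F * (e * x + 2 * y))
    by (unfold k1, O2; field).
  rewrite Hd.
  assert (h1 : F * e * x <= e * O2 / 2 * x^2 + F^2 * (e / (2*O2))).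
  { assert (0 <= e / (2*O2) * (O2 * x - F)^2).
    { apply Rmult_le_pos; [apply Rlt_le, Rdiv_lt_0_compat; lra| apply pow2_ge_0]. }
    replace (e / (2*O2) * (O2 * x - F)^2) with
      (e * O2 / 2 * x^2 + F^2 * (e / (2*O2)) - F * e * x) in H by (field; lra).
    lra. }
  assert (h2 : 2 * y * F <= sigma / 2 * y^2 + F^2 * (2 / sigma)).
  { assert (0 <= 2 / sigma * (sigma * y / 2 - F)^2).
    { apply Rmult_le_pos; [apply Rlt_le, Rdiv_lt_0_compat; lra| apply pow2_ge_0]. }
    replace (2 / sigma * (sigma * y / 2 - F)^2) with
      (sigma / 2 * y^2 + F^2 * (2 / sigma) - 2 * y * F) in H by (field; lra).
    lra. }
  assert (h3 : F^2 * (e / (2*O2)) <= M2 * (e / (2*O2)))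
    by (apply Rmult_le_compat_r; [apply Rlt_le, Rdiv_lt_0_compat; lra| lra]).
  assert (h4 : F^2 * (2 / sigma) <= M2 * (2 / sigma))
    by (apply Rmult_le_compat_r; [apply Rlt_le, Rdiv_lt_0_compat; lra| lra]).
  destruct (Hbnd x y) as [_ Hup].
  assert (h5 : m / a2 * quadV k1 e 1 x y <= m * (x^2 + y^2)).
  { replace (m * (x^2+y^2)) with (m / a2 * (a2 * (x^2+y^2))) by (field; lra).
    apply Rmult_le_compat_l; [apply Rlt_le, Rdiv_lt_0_compat; lra| lra]. }
  assert (0 <= x^2) by nra. assert (0 <= y^2) by nra.
  assert (m * x^2 <= e * O2 / 2 * x^2) by nra.
  assert (m * y^2 <= sigma / 2 * y^2) by nra.
  assert ((sigma - e) * y^2 >= 0) by nra.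
  nra.
Qed.
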